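(* For every $n\ge0$, the localization $(\underline n\downarrow\mathbf{Fin})[\mathcal I^{-1}]$, obtained from the coslice category $(\underline n\downarrow\mathbf{Fin})$ by formally inverting all morphisms whose underlying map is injective, is a thin category.
   Context: $\mathbf{Fin}$ is the category with objects $\underline k=\{1,\dots,k\}$ for $k\ge0$ and morphisms all functions. $\mathcal I$ denotes the injective maps (inverting the injective order-preserving maps together with the isomorphisms inverts all injective maps). Objects of $(\underline n\downarrow\mathbf{Fin})$ are functions $\underline n\to\underline k$, morphisms are functions $\underline k\to\underline k'$ making the triangle commute. A category is thin if any two parallel morphisms are equal. *)

(* Defs.v *)
From mathcomp Require Import all_boot.
Set Implicit Arguments. Unset Strict Implicit. Unset Printing Implicit Defensive.

(* The coslice category (n | Fin): objects are maps  n -> k  (k >= 0). *)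
Definition cobj (n : nat) := {k : nat & {ffun 'I_n -> 'I_k}}.

Definition ccod n (a : cobj n) : nat := projT1 a.
Definition cmap n (a : cobj n) : {ffun 'I_n -> 'I_(ccod a)} := projT2 a.

Definition is_chom {n} (a b : cobj n) (g : {ffun 'I_(ccod a) -> 'I_(ccod b)}) : bool :=
  [forall i, g (cmap a i) == cmap b i].

Arguments is_chom {n} a b g.

Definition chom n (a b : cobj n) := {g : {ffun 'I_(ccod a) -> 'I_(ccod b)} | is_chom a b g}.

Lemma chom_id_proof n (a : cobj n) : is_chom a a [ffun x => x].
Proof. by apply/forallP => i; rewrite ffunE. Qed.

Definition chom_id n (a : cobj n) : chom a a := exist (is_chom a a) _ (chom_id_proof a).

Lemma chom_comp_proof n (a b c : cobj n) (g : chom a b) (h : chom b c) :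
  is_chom a c [ffun x => sval h (sval g x)].
Proof.
apply/forallP => i; rewrite ffunE.
have /forallP/(_ i)/eqP -> := proj2_sig g.
exact: (forallP (proj2_sig h)).
Qed.

Definition chom_comp n (a b c : cobj n) (g : chom a b) (h : chom b c) : chom a c :=
  exist (is_chom a c) _ (chom_comp_proof g h).

Definition inj_hom n (a b : cobj n) (g : chom a b) : bool := injectiveb (sval g).

(* Localization (n | Fin)[I^-1], standard construction: morphisms are zigzags
   (formal composable strings of morphisms and formal inverses of morphisms in I),
   read left to right, modulo the smallest congruence generated by the relations
   of the category and the inverse relations. *)
Inductive zz n : cobj n -> cobj n -> Type :=
| zz_nil (a : cobj n) : zz a a
| zz_fwd (a b c : cobj n) (g : chom a b) : zz b c -> zz a c
| zz_bwd (a b c : cobj n) (w : chom b a) : inj_hom w -> zz b c -> zz a c.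

Fixpoint zz_cat n (a b c : cobj n) (p : zz a b) : zz b c -> zz a c :=
  match p in zz x y return zz y c -> zz x c with
  | zz_nil _ => fun s => s
  | zz_fwd _ _ _ g p' => fun s => zz_fwd g (zz_cat p' s)
  | zz_bwd _ _ _ w hw p' => fun s => zz_bwd hw (zz_cat p' s)
  end.

Inductive zz_equiv n : forall a b : cobj n, zz a b -> zz a b -> Prop :=
| zze_refl a b (p : zz a b) : zz_equiv p p
| zze_sym a b (p q : zz a b) : zz_equiv p q -> zz_equiv q p
| zze_trans a b (p q r : zz a b) : zz_equiv p q -> zz_equiv q r -> zz_equiv p r
| zze_ctx x a b y (r : zz x a) (p q : zz a b) (s : zz b y) :
    zz_equiv p q -> zz_equiv (zz_cat r (zz_cat p s)) (zz_cat r (zz_cat q s))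
| zze_id a : zz_equiv (zz_fwd (chom_id a) (zz_nil a)) (zz_nil a)
| zze_comp a b c (g : chom a b) (h : chom b c) :
    zz_equiv (zz_fwd g (zz_fwd h (zz_nil c))) (zz_fwd (chom_comp g h) (zz_nil c))
| zze_inv_r a b (w : chom a b) (hw : inj_hom w) :
    zz_equiv (zz_fwd w (zz_bwd hw (zz_nil a))) (zz_nil a)
| zze_inv_l a b (w : chom a b) (hw : inj_hom w) :
    zz_equiv (zz_bwd hw (zz_fwd w (zz_nil b))) (zz_nil b).

Definition localization_thin (n : nat) : Prop :=
  forall (a b : cobj n) (p q : zz a b), zz_equiv p q.

(* Main.v *)
Require Import Defs.
From mathcomp Require Import all_boot.
Set Implicit Arguments. Unset Strict Implicit. Unset Printing Implicit Defensive.

Lemma zz_cat_nil n (a b : cobj n) (p : zz a b) : zz_cat p (zz_nil b) = p.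
Proof. by elim: p => //= [a0 b0 c g p -> | a0 b0 c w hw p ->]. Qed.

Lemma zze_fwd n (a b c : cobj n) (g : chom a b) (p q : zz b c) :
  zz_equiv p q -> zz_equiv (zz_fwd g p) (zz_fwd g q).
Proof.
move=> H; have := zze_ctx (zz_fwd g (zz_nil b)) (zz_nil c) H.
by rewrite /= !zz_cat_nil.
Qed.

Lemma zze_bwd n (a b c : cobj n) (w : chom b a) (hw : inj_hom w) (p q : zz b c) :
  zz_equiv p q -> zz_equiv (zz_bwd hw p) (zz_bwd hw q).
Proof.
move=> H; have := zze_ctx (zz_bwd hw (zz_nil b)) (zz_nil c) H.
by rewrite /= !zz_cat_nil.
Qed.

Lemma zze_comp' n (a b c d : cobj n) (g : chom a b) (h : chom b c) (p : zz c d) :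
  zz_equiv (zz_fwd g (zz_fwd h p)) (zz_fwd (chom_comp g h) p).
Proof. exact: (zze_ctx (zz_nil a) p (zze_comp g h)). Qed.

Lemma zze_inv_r' n (a b c : cobj n) (w : chom a b) (hw : inj_hom w) (p : zz a c) :
  zz_equiv (zz_fwd w (zz_bwd hw p)) p.
Proof. exact: (zze_ctx (zz_nil a) p (zze_inv_r hw)). Qed.

Lemma zze_inv_l' n (a b c : cobj n) (w : chom a b) (hw : inj_hom w) (p : zz b c) :
  zz_equiv (zz_bwd hw (zz_fwd w p)) p.
Proof. exact: (zze_ctx (zz_nil b) p (zze_inv_l hw)). Qed.

Lemma chom_eq n (a b : cobj n) (g h : chom a b) : (forall x, sval g x = sval h x) -> g = h.
Proof. by move=> H; apply: val_inj; apply/ffunP => x; exact: H. Qed.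

Lemma chomP n (a b : cobj n) (g : chom a b) i : sval g (cmap a i) = cmap b i.
Proof. exact/eqP/(forallP (proj2_sig g)). Qed.

Lemma bwd_eq n (a b c : cobj n) (x y : chom b a) (hx : inj_hom x) (hy : inj_hom y) (p : zz b c) :
  x = y -> zz_bwd hx p = zz_bwd hy p.
Proof. by move=> E; subst y; rewrite (bool_irrelevance hx hy). Qed.

Lemma inj_comp n (a b c : cobj n) (y : chom a b) (x : chom b c) :
  inj_hom y -> inj_hom x -> inj_hom (chom_comp y x).
Proof.
move=> /injectiveP hy /injectiveP hx; apply/injectiveP => u v.
by rewrite /= !ffunE => /hx /hy.
Qed.

Lemma bwd_comp n (a b c d : cobj n) (x : chom b a) (y : chom c b) (hx : inj_hom x) (hy : inj_hom y)
  (hyx : inj_hom (chom_comp y x)) (p : zz c d) :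
  zz_equiv (zz_bwd hx (zz_bwd hy p)) (zz_bwd hyx p).
Proof.
apply: zze_sym.
apply: zze_trans (zze_sym (zze_inv_l' hx (zz_bwd hyx p))) _.
apply: zze_bwd.
apply: zze_trans (zze_sym (zze_inv_l' hy _)) _.
apply: zze_bwd.
apply: zze_trans (zze_comp' _ _ _) _.
exact: zze_inv_r'.
Qed.
Definition img n (a : cobj n) : seq 'I_(ccod a) := undup [seq cmap a i | i <- enum 'I_n].
Lemma img_in n (a : cobj n) (i : 'I_n) : cmap a i \in img a.
Proof. by rewrite mem_undup map_f // mem_enum. Qed.
Lemma img_mem n (a : cobj n) (i : 'I_n) : index (cmap a i) (img a) < size (img a).
Proof. by rewrite index_mem img_in. Qed.
Definition smap n (a : cobj n) : {ffun 'I_n -> 'I_(size (img a))} :=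
  [ffun i => Ordinal (img_mem a i)].
Definition sobj n (a : cobj n) : cobj n :=
  existT (fun k => {ffun 'I_n -> 'I_k}) (size (img a)) (smap a).
Definition iota_f n (a : cobj n) : {ffun 'I_(ccod (sobj a)) -> 'I_(ccod a)} :=
  [ffun j => tnth (in_tuple (img a)) j].
Lemma iota_chom n (a : cobj n) : is_chom (sobj a) a (iota_f a).
Proof.
apply/forallP => i; rewrite /cmap /= !ffunE (tnth_nth (cmap a i)) /=.
by rewrite nth_index ?img_in.
Qed.
Definition iota n (a : cobj n) : chom (sobj a) a := exist (is_chom (sobj a) a) _ (iota_chom a).
Lemma iota_inj n (a : cobj n) : inj_hom (iota a).
Proof.
apply/injectiveP => u v; rewrite /= !ffunE.
by move/(tuple_uniqP (in_tuple (img a)) (undup_uniq _)).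
Qed.
Lemma s_surj n (a : cobj n) (j : 'I_(ccod (sobj a))) : exists i, cmap (sobj a) i = j.
Proof.
have : tnth (in_tuple (img a)) j \in img a by apply: mem_tnth.
rewrite mem_undup => /mapP [i _ Ei]; exists i.
apply: (injectiveP _ (iota_inj a)).
by rewrite chomP /= ffunE Ei.
Qed.
Lemma s_ker n (a : cobj n) i1 i2 : (cmap (sobj a) i1 = cmap (sobj a) i2) <-> (cmap a i1 = cmap a i2).
Proof.
split => [E | E].
  by rewrite -!(chomP (iota a)) E.
apply: (injectiveP _ (iota_inj a)).
by rewrite !chomP.
Qed.
Lemma s_uniq n (a b : cobj n) (g h : chom (sobj a) b) : g = h.
Proof.
apply: chom_eq => j; have [i <-] := s_surj j.
by rewrite !chomP.
Qed.
Lemma exists_from_s n (a b : cobj n) :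
  (forall i1 i2, cmap a i1 = cmap a i2 -> cmap b i1 = cmap b i2) ->
  exists c : chom (sobj a) b, True.
Proof.
move=> K.
have [pre Hpre] : exists pre : forall j : 'I_(ccod (sobj a)), 'I_n, forall j, cmap (sobj a) (pre j) = j.
  apply: (@fin_all_exists _ (fun _ => 'I_n) (fun j i => cmap (sobj a) i = j)) => j; exact: s_surj.
have Hc : is_chom (sobj a) b [ffun j => cmap b (pre j)].
  by apply/forallP => i; rewrite ffunE; apply/eqP; apply: K; apply/s_ker; exact: Hpre.
by exists (exist (is_chom (sobj a) b) _ Hc).
Qed.
Definition NF n (a b : cobj n) (c : chom (sobj a) b) : zz a b :=
  zz_bwd (iota_inj a) (zz_fwd c (zz_nil b)).

Lemma nf_main n (a b : cobj n) (p : zz a b) : exists c, zz_equiv p (NF c).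
Proof.
elim: p => [a0 | a0 b0 c0 g p [c' IH] | a0 b0 c0 w hw p [c' IH]].
- exists (iota a0); apply: zze_sym; exact: zze_inv_l'.
- have [t _] : exists t : chom (sobj a0) (sobj b0), True.
    apply: exists_from_s => i1 i2 E; apply/s_ker.
    by rewrite -!(chomP g) E.
  exists (chom_comp t c').
  apply: zze_trans (zze_fwd g IH) _; rewrite /NF.
  apply: zze_sym.
  apply: zze_trans (zze_bwd _ (zze_sym (zze_comp' _ _ _))) _.
  apply: zze_trans (zze_bwd _ (zze_fwd _ (zze_sym (zze_inv_r' (iota_inj b0) _)))) _.
  apply: zze_trans (zze_bwd _ (zze_comp' _ _ _)) _.
  rewrite (s_uniq (chom_comp t (iota b0)) (chom_comp (iota a0) g)).
  apply: zze_trans (zze_bwd _ (zze_sym (zze_comp' _ _ _))) _.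
  exact: zze_inv_l'.
- have [u _] : exists u : chom (sobj a0) (sobj b0), True.
    apply: exists_from_s => i1 i2 E; apply/s_ker.
    apply: (injectiveP _ hw).
    by rewrite !chomP.
  have hu : inj_hom u.
    apply/injectiveP => j1 j2.
    have [i1 <-] := s_surj j1; have [i2 <-] := s_surj j2.
    rewrite !chomP => /s_ker E; apply/s_ker.
    by rewrite -!(chomP w) E.
  exists (chom_comp u c').
  apply: zze_trans (zze_bwd hw IH) _; rewrite /NF.
  apply: zze_trans (zze_bwd hw (zze_bwd _ (zze_sym (zze_inv_l' hu _)))) _.
  apply: zze_trans (zze_bwd hw (zze_bwd _ (zze_bwd _ (zze_comp' _ _ _)))) _.
  apply: zze_trans (zze_bwd hw (bwd_comp _ _ (inj_comp hu (iota_inj b0)) _)) _.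
  apply: zze_trans (bwd_comp _ _ (inj_comp (inj_comp hu (iota_inj b0)) hw) _) _.
  rewrite (bwd_eq _ (iota_inj a0) _ (s_uniq _ (iota a0))).
  exact: zze_refl.
Qed.

Theorem mainTheorem18 (n : nat) : localization_thin n.
Proof.
move=> a b p q.
have [c1 H1] := nf_main p; have [c2 H2] := nf_main q.
rewrite (s_uniq c1 c2) in H1.
exact: zze_trans H1 (zze_sym H2).
Qed.
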